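(* In the quantum LOCAL model, the subgraph state construction problem can be solved in $2$ rounds: on any network $G=(V,E)$ where each node $u\in V$ receives a bit $c_u\in\{0,1\}$, there is a $2$-round quantum LOCAL algorithm at the end of which the graph state of the induced subgraph $G'=(V',E')$ of $G$ on $V'=\{v\in V: c_v=1\}$ is shared by the nodes of $V'$, each node $v\in V'$ holding the one-qubit register $\mathsf{Q}_v$ of that graph state.
   Context: Quantum LOCAL model: the network is an undirected unweighted graph; each node is a quantum processor with a distinct identifier, initially knowing only its incident edges and the number of nodes. Computation proceeds in synchronous rounds; in each round each node performs arbitrary local quantum operations and sends one quantum message (any number of qubits) together with classical information to each neighbour. Initially no entanglement or randomness is shared. Graph state of a graph $G'=(V',E')$: take one-qubit registers $\mathsf{Q}_u$, $u\in V'$, initialized to $\bigotimes_{u}|0\rangle_{\mathsf{Q}_u}$, apply the Hadamard gate $\mathrm{H}=\frac{1}{\sqrt2}\begin{pmatrix}1&1\\1&-1\end{pmatrix}$ to each register, then for each edge $\{u,v\}\in E'$ apply the controlled-$Z$ gate $\mathrm{CZ}=\mathrm{diag}(1,1,1,-1)$ to $(\mathsf{Q}_u,\mathsf{Q}_v)$. *)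

(* Defs.v *)
(* Qubit systems are indexed by finite label types; computational basis
   states of a system with labels S are the functions S -> bool; operators
   and density matrices are given by their matrix entries. *)
From HB Require Import structures.
From mathcomp Require Import all_boot all_order all_algebra.
From mathcomp Require Import algC.
Set Implicit Arguments. Unset Strict Implicit. Unset Printing Implicit Defensive.
Import Order.TTheory GRing.Theory Num.Theory.
Local Open Scope ring_scope.

Definition Basis (S : finType) := {ffun S -> bool}.
Definition Vec (S : finType) := Basis S -> algC.
Definition Op (S : finType) := Basis S -> Basis S -> algC.

Definition zero_basis (S : finType) : Basis S := [ffun _ => false].
Arguments zero_basis : clear implicits.

Definition op_mul (S : finType) (A B : Op S) : Op S :=
  fun x y => \sum_(z : Basis S) A x z * B z y.
Definition op_adj (S : finType) (A : Op S) : Op S := fun x y => (A y x)^*.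

(* a list of Kraus operators is a quantum channel (CPTP map) *)
Definition is_channel (S : finType) (ks : seq (Op S)) : Prop :=
  forall x y : Basis S,
    \sum_(K <- ks) op_mul (op_adj K) K x y = (x == y)%:R.

Definition apply_channel (S : finType) (ks : seq (Op S)) (rho : Op S) : Op S :=
  fun x y => \sum_(K <- ks) \sum_(z : Basis S) \sum_(w : Basis S)
               K x z * rho z w * (K y w)^*.

(* Lift of an operator acting on the qubits f(S) of a larger system L
   (tensored with the identity on the other qubits); f is injective. *)
Definition restrict (S L : finType) (f : S -> L) (x : Basis L) : Basis S :=
  [ffun s => x (f s)].
Definition lift_op (S L : finType) (f : S -> L) (A : Op S) : Op L :=
  fun x y => A (restrict f x) (restrict f y) *
             [forall l, (l \notin codom f) ==> (x l == y l)]%:R.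

(* Reduced state (partial trace of everything but the qubits f(T)),
   for an injective f : T -> L. *)
Definition glue (T L : finType) (f : T -> L) (a : Basis T) (z : Basis L)
  : Basis L :=
  [ffun l => if [pick t | f t == l] is Some t then a t else z l].
Definition reduced (T L : finType) (f : T -> L) (rho : Op L) : Op T :=
  fun a b => \sum_(z : Basis L | [forall t, z (f t) == false])
               rho (glue f a z) (glue f b z).

Definition density (S : finType) (psi : Vec S) : Op S :=
  fun x y => psi x * (psi y)^*.

Definition set_bit (S : finType) (x : Basis S) (q : S) (b : bool) : Basis S :=
  [ffun l => if l == q then b else x l].

(* one-qubit gate g (entries g out in) applied to qubit q *)
Definition apply1 (S : finType) (g : bool -> bool -> algC) (q : S)
  (psi : Vec S) : Vec S :=
  fun x => \sum_(b : bool) g (x q) b * psi (set_bit x q b).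

(* two-qubit gate g applied to qubits (q1, q2), q1 <> q2 *)
Definition apply2 (S : finType) (g : bool * bool -> bool * bool -> algC)
  (q1 q2 : S) (psi : Vec S) : Vec S :=
  fun x => \sum_(b1 : bool) \sum_(b2 : bool)
     g (x q1, x q2) (b1, b2) * psi (set_bit (set_bit x q1 b1) q2 b2).

Definition hadamard (o i : bool) : algC :=
  (sqrtC 2)^-1 * (if o && i then -1 else 1).
Definition cz (o i : bool * bool) : algC :=
  if o == i then (if o.1 && o.2 then -1 else 1) else 0.

Definition ket0 (S : finType) : Vec S := fun x => (x == zero_basis S)%:R.
Arguments ket0 : clear implicits.

(* the edges {u,v} of a simple graph (T, r), each listed once *)
Definition edge_list (T : finType) (r : rel T) : seq (T * T) :=
  [seq p <- enum {: T * T}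
     | r p.1 p.2 && (enum_rank p.1 < enum_rank p.2)%N].

Definition graph_state (T : finType) (r : rel T) : Vec T :=
  foldr (fun pq psi => apply2 cz pq.1 pq.2 psi)
        (foldr (fun q psi => apply1 hadamard q psi) (ket0 T) (enum T))
        (edge_list r).

(* What a node initially knows: number of nodes, its identifier, the
   identifiers of its neighbours (its incident edges, listed in increasing
   order of identifier), and its input bit. *)
Record view := View { v_n : nat; v_id : nat; v_nbrs : seq nat; v_c : bool }.

(* Local registers of a node with degree d, memory of m.+1 qubits and
   messages of k qubits:
     inl (inl i)      : memory qubit i  (memory qubit 0 is the output qubit Q)
     inl (inr (j, a)) : qubit a of the message received from neighbour j
     inr (j, a)       : qubit a of the message to be sent to neighbour j
   (neighbours numbered by their rank in v_nbrs). *)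
Definition LocalLab (m k d : nat) :=
  ('I_m.+1 + ('I_d * 'I_k) + ('I_d * 'I_k))%type.

(* Classical messages / classical side information are carried by qubits
   in computational basis states. *)
Record algorithm := Algorithm {
  memsize : nat -> nat;
  msgsize : nat -> nat;
  local_op : forall (s : nat) (w : view),
      seq (Op (LocalLab (memsize (v_n w)) (msgsize (v_n w)) (size (v_nbrs w))))
}.

Definition valid_algorithm (A : algorithm) : Prop :=
  forall s w, is_channel (local_op A s w).

Section Network.
Variables (A : algorithm) (R n : nat) (e : rel 'I_n) (id : 'I_n -> nat)
          (c : 'I_n -> bool).

Definition nbrs_sorted (u : 'I_n) : seq 'I_n :=
  sort (fun a b => (id a <= id b)%N) [seq v <- enum 'I_n | e u v].

Definition view_of (u : 'I_n) : view :=
  View n (id u) (map id (nbrs_sorted u)) (c u).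

(* Global qubit labels: memories (node, index) and message registers
   P[t](sender, receiver, index) for t = 0 .. R+1.  At step s (0 <= s <= R)
   every node acts on its memory, the messages P[s](., u) it received, and
   the (initially |0>) outgoing registers P[s+1](u, .), which are then
   delivered.  Steps 0..R-1 are the R communication rounds, step R is the
   final local computation (registers P[R+1] are never read, i.e. discarded). *)
Definition GlobalLab :=
  (('I_n * 'I_(memsize A n).+1) +
   ('I_R.+2 * 'I_n * 'I_n * 'I_(msgsize A n)))%type.

Definition embed (s : nat) (u : 'I_n)
  (l : LocalLab (memsize A (v_n (view_of u))) (msgsize A (v_n (view_of u)))
                (size (v_nbrs (view_of u)))) : GlobalLab :=
  match l with
  | inl (inl i) => inl (u, i)
  | inl (inr (j, a)) => inr (inord s, nth u (nbrs_sorted u) j, u, a)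
  | inr (j, a) => inr (inord s.+1, u, nth u (nbrs_sorted u) j, a)
  end.

Definition init_state : Op GlobalLab :=
  fun x y => ((x == zero_basis _) && (y == zero_basis _))%:R.

Definition do_step (s : nat) (rho : Op GlobalLab)
  : Op GlobalLab :=
  foldr (fun u r => apply_channel
            (map (lift_op (@embed s u)) (local_op A s (view_of u))) r)
        rho (enum 'I_n).

Definition final_state : Op GlobalLab :=
  foldl (fun rho s => do_step s rho) init_state (iota 0 R.+1).

Definition selected := {v : 'I_n | c v}.
Definition induced_rel : rel selected := fun a b => e (val a) (val b).

Definition out_qubit (v : selected) : GlobalLab := inl (val v, ord0).

Definition output_state : Op selected := reduced out_qubit final_state.

End Network.

(* Main.v *)
Require Import Defs.
From mathcomp Require Import all_boot all_order all_algebra.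
From mathcomp Require Import algC.
From mathcomp Require Import ring zify.
From Stdlib Require Import FunctionalExtensionality.
Set Implicit Arguments. Unset Strict Implicit. Unset Printing Implicit Defensive.
Import Order.TTheory GRing.Theory Num.Theory.


Section Half.
Variables (T : finType) (E : rel T) (X : pred T) (k : T -> nat).
Hypotheses (Esym : symmetric E) (Eirr : irreflexive E) (kinj : injective k).

Definition PP p q := E p q && X p && X q.

Lemma half_swap : \sum_p \sum_q (PP p q && (k q < k p)) = \sum_p \sum_q (PP p q && (k p < k q)).
Proof.
rewrite exchange_big /=; apply: eq_bigr => p _; apply: eq_bigr => q _.
by rewrite /PP Esym; case: (X p); case: (X q); rewrite ?andbF ?andbT.
Qed.

Lemma half_sum :
  (\sum_p \sum_q (PP p q && (k q < k p))) * 2 = \sum_p \sum_q PP p q.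
Proof.
have sw : \sum_p \sum_q (PP p q && (k q < k p)) = \sum_p \sum_q (PP p q && (k p < k q)).
  rewrite exchange_big /=; apply: eq_bigr => p _; apply: eq_bigr => q _.
  by rewrite /PP Esym; case: (X p); case: (X q); rewrite ?andbF ?andbT.
rewrite muln2 -addnn {2}sw -big_split /=; apply: eq_bigr => p _.
rewrite -big_split /=; apply: eq_bigr => q _.
case: (boolP (PP p q)) => H //=.
have Hpq : p != q by apply/eqP => Epq; move: H; rewrite /PP Epq Eirr.
have Hk : k p != k q by apply: contra Hpq => /eqP/kinj ->.
move: Hk; case: (ltngtP (k p) (k q)) => //.
Qed.

Lemma half_sum2 :
  (\sum_p \sum_q (PP p q && (k p < k q))) * 2 = \sum_p \sum_q PP p q.
Proof. by rewrite -half_swap half_sum. Qed.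
End Half.

Local Open Scope ring_scope.
Set Implicit Arguments.


Section Generic.
Variables (S L : finType) (f : S -> L).
Hypothesis finj : injective f.

Lemma glue_in (a : Basis S) (z : Basis L) t : glue f a z (f t) = a t.
Proof.
rewrite /glue ffunE; case: pickP => [t' /eqP/finj -> //|/(_ t)]; by rewrite eqxx.
Qed.

Lemma glue_out (a : Basis S) (z : Basis L) l : l \notin codom f -> glue f a z l = z l.
Proof.
move=> H; rewrite /glue ffunE; case: pickP => [t' /eqP Ht|//].
by move: H; rewrite -Ht codom_f.
Qed.

Lemma restrict_glue (a : Basis S) z : restrict f (glue f a z) = a.
Proof. by apply/ffunP => t; rewrite ffunE glue_in. Qed.

Lemma glue_restrict (x z : Basis L) :
  [forall l, (l \notin codom f) ==> (x l == z l)] -> glue f (restrict f z) x = z.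
Proof.
move/forallP=> H; apply/ffunP => l; case: (boolP (l \in codom f)).
  by case/codomP=> t ->; rewrite glue_in ffunE.
by move=> Hl; rewrite glue_out //; apply/eqP; move/implyP: (H l); apply.
Qed.

Lemma glue_agree (a : Basis S) (x : Basis L) :
  [forall l, (l \notin codom f) ==> (x l == glue f a x l)].
Proof. by apply/forallP=> l; apply/implyP=> Hl; rewrite glue_out. Qed.

Lemma sum_agree (F : Basis L -> algC) (x : Basis L) :
  \sum_(z : Basis L) [forall l, (l \notin codom f) ==> (x l == z l)]%:R * F z
  = \sum_(a : Basis S) F (glue f a x).
Proof.
rewrite (bigID (fun z : Basis L => [forall l, (l \notin codom f) ==> (x l == z l)])) /=.
rewrite [X in _ + X]big1 ?addr0; last by move=> z /negbTE ->; rewrite mul0r.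
rewrite (reindex_onto (fun a => glue f a x) (restrict f)); last first.
  by move=> z Hz; rewrite glue_restrict.
apply: eq_big => [a|a _]; last by rewrite glue_agree mul1r.
by rewrite glue_agree restrict_glue eqxx.
Qed.

Definition LK (K : Op S) (psi : Vec L) : Vec L :=
  fun x => \sum_(a : Basis S) K (restrict f x) a * psi (glue f a x).

Lemma lift_apply (K : Op S) (psi : Vec L) x :
  \sum_(z : Basis L) lift_op f K x z * psi z = LK K psi x.
Proof.
have -> : LK K psi x = \sum_a (fun z => K (restrict f x) (restrict f z) * psi z) (glue f a x).
  by apply: eq_bigr => a _; rewrite restrict_glue.
rewrite -(sum_agree (fun z => K (restrict f x) (restrict f z) * psi z)); apply: eq_bigr => z _.
by rewrite /lift_op mulrCA mulrA.
Qed.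

Lemma channel_lift (ks : seq (Op S)) (psi : Vec L) x y :
  apply_channel (map (lift_op f) ks) (density psi) x y
  = \sum_(K <- ks) LK K psi x * (LK K psi y)^*.
Proof.
rewrite /apply_channel big_map; apply: eq_bigr => K _.
rewrite -!lift_apply rmorph_sum mulr_suml; apply: eq_bigr => z _.
rewrite mulr_sumr; apply: eq_bigr => w _.
rewrite /density !rmorphM /=. ring.
Qed.

End Generic.

Definition permop (S : finType) (p : Basis S -> Basis S) (ph : Basis S -> algC) : Op S :=
  fun bo bi => ph bi * (bo == p bi)%:R.

Definition repl (S : finType) (phi : Vec S) : seq (Op S) :=
  [seq (fun bo bi => phi bo * (bi == z)%:R) | z <- enum (Basis S)].

Section Chan.
Variable S : finType.

Lemma permop_channel (p : Basis S -> Basis S) ph :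
  involutive p -> (forall a, ph a * (ph a)^* = 1) -> is_channel [:: permop p ph].
Proof.
move=> pK phN x y; rewrite big_seq1 /op_mul /op_adj /permop.
rewrite (bigD1 (p x)) //= big1; last first.
  by move=> z /negbTE Hz; rewrite Hz mulr0 rmorph0 mul0r.
rewrite eqxx (can_eq pK) addr0 mulr1.
case: eqP => [->|_]; last by rewrite !mulr0.
by rewrite mulr1 mulrC phN.
Qed.

Lemma repl_channel (phi : Vec S) :
  \sum_(b : Basis S) phi b * (phi b)^* = 1 -> is_channel (repl phi).
Proof.
move=> N x y; rewrite /repl big_map big_enum /=.
rewrite (bigD1 x) //= big1; last first.
  move=> z Hz; rewrite /op_mul big1 // => w _.
  by rewrite /op_adj eq_sym (negbTE Hz) mulr0 rmorph0 mul0r.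
rewrite addr0 /op_mul /op_adj eqxx.
case: (boolP (x == y)) => [/eqP Exy|Hxy].
  subst y; rewrite eqxx (_ : true%:R = 1 :> algC) // -[RHS]N; apply: eq_bigr => w _; rewrite !mulr1 mulrC //.
by rewrite big1 // => w _; rewrite eq_sym (negbTE Hxy) !mulr0.
Qed.
End Chan.


Section Chan2.
Variables (S L : finType) (f : S -> L).
Hypothesis finj : injective f.

Lemma LK_permop p ph psi x : involutive p ->
  LK f (permop p ph) psi x = ph (p (restrict f x)) * psi (glue f (p (restrict f x)) x).
Proof.
move=> pK; rewrite /LK /permop (bigD1 (p (restrict f x))) //= big1 ?addr0.
  by rewrite pK eqxx mulr1.
move=> a Ha; case: eqP => [E|_]; last by rewrite mulr0 mul0r.
by move: Ha; rewrite E pK eqxx.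
Qed.

Lemma LK_repl phi z psi x :
  LK f (fun bo bi => phi bo * (bi == z)%:R) psi x = phi (restrict f x) * psi (glue f z x).
Proof.
rewrite /LK (bigD1 z) //= big1 ?addr0; first by rewrite eqxx mulr1.
by move=> a /negbTE ->; rewrite mulr0 mul0r.
Qed.

Lemma chan_permop p ph psi : involutive p ->
  apply_channel (map (lift_op f) [:: permop p ph]) (density psi)
  = density (fun x => ph (p (restrict f x)) * psi (glue f (p (restrict f x)) x)).
Proof.
move=> pK; apply: functional_extensionality => x; apply: functional_extensionality => y.
by rewrite channel_lift // big_seq1 !LK_permop.
Qed.

Lemma chan_repl phi z0 psi : (forall z x, z != z0 -> psi (glue f z x) = 0) ->
  apply_channel (map (lift_op f) (repl phi)) (density psi)
  = density (fun x => phi (restrict f x) * psi (glue f z0 x)).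
Proof.
move=> H; apply: functional_extensionality => x; apply: functional_extensionality => y.
rewrite channel_lift // /repl big_map big_enum /= (bigD1 z0) //= big1 ?addr0.
  by rewrite !LK_repl.
by move=> z Hz; rewrite !LK_repl H // mulr0 mul0r.
Qed.
End Chan2.

Definition St (L : finType) (K : Type) (key : Basis L -> K) (amp : K -> algC)
  (cfg : K -> Basis L) : Vec L := fun x => amp (key x) * (x == cfg (key x))%:R.

Section StLemmas.
Variables (S L : finType) (f : S -> L).
Hypothesis finj : injective f.

Lemma glue_eqE (a : Basis S) (x C : Basis L) :
  (glue f a x == C) = (a == restrict f C) && [forall l, (l \notin codom f) ==> (x l == C l)].
Proof.
apply/eqP/andP => [<-|[/eqP -> /forallP H]].
  by rewrite restrict_glue // eqxx glue_agree.
by rewrite glue_restrict //; apply/forallP.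
Qed.

Lemma eq_glueE (a : Basis S) (x C : Basis L) :
  (x == glue f a C) = (restrict f x == a) && [forall l, (l \notin codom f) ==> (x l == C l)].
Proof.
rewrite eq_sym glue_eqE // eq_sym; congr (_ && _).
by apply: eq_forallb => l; rewrite eq_sym.
Qed.

Lemma St_perm (K : Type) (key : Basis L -> K) amp cfg p ph :
  involutive p -> (forall x, key (glue f (p (restrict f x)) x) = key x) ->
  (fun x => ph (p (restrict f x)) * St key amp cfg (glue f (p (restrict f x)) x))
  = St key (fun k => amp k * ph (restrict f (cfg k)))
           (fun k => glue f (p (restrict f (cfg k))) (cfg k)).
Proof.
move=> pK Hkey; apply: functional_extensionality => x.
rewrite /St Hkey glue_eqE // eq_glueE //.
set C := cfg (key x).
have -> : (p (restrict f x) == restrict f C) = (restrict f x == p (restrict f C)).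
  by apply/eqP/eqP => [<-|->]; rewrite pK.
case: eqP => [->|_] /=; last by rewrite !mulr0.
by rewrite pK; ring.
Qed.

Lemma St_repl (K : Type) (key : Basis L -> K) amp cfg (z0 : Basis S) (k0 : K -> K)
  (bt : K -> bool) (q0 : S) (w : bool -> algC) (g : bool -> Basis S) :
  (forall x, key (glue f z0 x) = k0 (key x)) ->
  (forall k, restrict f (cfg (k0 k)) = z0) ->
  (forall x, bt (key x) = x (f q0)) -> (forall b, g b q0 = b) ->
  (fun x => w (restrict f x q0) * (restrict f x == g (restrict f x q0))%:R
            * St key amp cfg (glue f z0 x))
  = St key (fun k => w (bt k) * amp (k0 k)) (fun k => glue f (g (bt k)) (cfg (k0 k))).
Proof.
move=> Hkey Hreg Hbt Hg; apply: functional_extensionality => x.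
rewrite /St Hkey glue_eqE // Hreg eqxx /= eq_glueE // ffunE -Hbt.
case: eqP => _ /=; last by rewrite mulr0 !mul0r mulr0.
by rewrite mulr1 mulrA.
Qed.

Lemma St_glue0 (K : Type) (key : Basis L -> K) amp cfg (z0 : Basis S) :
  (forall k, amp k != 0 -> restrict f (cfg k) = z0) ->
  forall z x, z != z0 -> St key amp cfg (glue f z x) = 0.
Proof.
move=> H z x Hz; rewrite /St.
case: (eqVneq (amp (key (glue f z x))) 0) => [->|Ha]; first by rewrite mul0r.
case: eqP => [E|_]; last by rewrite mulr0.
by move: Hz; rewrite -(H _ Ha) -E restrict_glue // eqxx.
Qed.
End StLemmas.

Set Implicit Arguments.

Unset Implicit Arguments.

Definition LL d := LocalLab 0 1 d.
Definition lQ d : LL d := inl (inl ord0).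
Definition lin d (j : 'I_d) : LL d := inl (inr (j, ord0)).
Definition lout d (j : 'I_d) : LL d := inr (j, ord0).

Definition g0 d (bt : bool) : Basis (LL d) :=
  [ffun l : LL d => match l with inl (inl _) => bt | inl (inr _) => false | inr _ => bt end].
Definition w0 (c bt : bool) : algC := if c then (sqrtC 2)^-1 else (~~ bt)%:R.
Definition phi0 d (c : bool) : Vec (LL d) :=
  fun b => w0 c (b (lQ d)) * (b == g0 d (b (lQ d)))%:R.

Definition p1 d (b : Basis (LL d)) : Basis (LL d) :=
  [ffun l : LL d => match l with
     | inl (inl i) => b (inl (inl i))
     | inl (inr ja) => b (inr ja)
     | inr ja => b (inl (inr ja)) end].
Definition ph1 (w : view) (b : Basis (LL (size (v_nbrs w)))) : algC :=
  (-1) ^+ (b (lQ _) * \sum_(j < size (v_nbrs w) | (nth 0 (v_nbrs w) j < v_id w)%N) b (lin _ j))%N.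
Definition p2 d (b : Basis (LL d)) : Basis (LL d) :=
  [ffun l : LL d => match l with
     | inl (inl i) => b (inl (inl i))
     | inl (inr ja) => b (inl (inr ja)) (+) b (lQ d)
     | inr ja => b (inr ja) end].

Definition Alg : algorithm :=
  @Algorithm (fun _ => 0%N) (fun _ => 1%N)
   (fun s w => match s with
     | 0 => repl (phi0 (size (v_nbrs w)) (v_c w))
     | 1 => [:: permop (@p1 _) (ph1 w)]
     | _ => [:: permop (@p2 _) (fun _ => 1)] end).

Lemma p1K d : involutive (@p1 d).
Proof. by move=> b; apply/ffunP => [[[i|ja]|ja]]; rewrite !ffunE. Qed.

Lemma p2K d : involutive (@p2 d).
Proof.
move=> b; apply/ffunP => [[[i|ja]|ja]]; rewrite /lQ !ffunE //.
by rewrite addbK.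
Qed.

Lemma sqrt2_conj : ((sqrtC 2)^-1)^* = (sqrtC 2)^-1 :> algC.
Proof. by apply: geC0_conj; rewrite invr_ge0 sqrtC_ge0 ler0n. Qed.

Lemma sqrt2_sq : (sqrtC 2)^-1 * (sqrtC 2)^-1 = 2^-1 :> algC.
Proof. by rewrite -invrM ?unitfE ?sqrtC_eq0 ?pnatr_eq0 // -expr2 sqrtCK. Qed.

Lemma sign_norm (k : nat) : (-1) ^+ k * ((-1) ^+ k)^* = 1 :> algC.
Proof. by rewrite rmorphXn /= rmorphN1 -exprMn mulrNN mulr1 expr1n. Qed.

Lemma natr_true : true%:R = 1 :> algC. Proof. by []. Qed.
Lemma natr_false : false%:R = 0 :> algC. Proof. by []. Qed.

Lemma g0_Q d bt : g0 d bt (lQ d) = bt.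
Proof. by rewrite ffunE. Qed.

Lemma phi0_norm d c : \sum_(b : Basis (LL d)) phi0 d c b * (phi0 d c b)^* = 1.
Proof.
rewrite (bigD1 (g0 d false)) //= (bigD1 (g0 d true)) /=; last first.
  by apply/eqP => E; move: (congr1 (fun b : Basis (LL d) => b (lQ d)) E); rewrite !g0_Q.
rewrite big1; last first.
  move=> b /andP [H1 H2]; rewrite /phi0.
  case: (boolP (b == _)) => [/eqP Eb|_]; last by rewrite mulr0 mul0r.
  by move: H1 H2; rewrite Eb; case: (b (lQ d)); rewrite eqxx.
rewrite /phi0 !g0_Q !eqxx /w0 addr0 (_ : true%:R = 1 :> algC) //.
case: c; last by rewrite /= !mulr1 mul0r rmorph1 mulr1 addr0.
rewrite !mulr1 sqrt2_conj sqrt2_sq.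
by field.
Qed.

Lemma Alg_valid : valid_algorithm Alg.
Proof.
move=> [|[|s]] w /=.
- exact: repl_channel (phi0_norm _ _).
- by apply: permop_channel; [exact: p1K | move=> a; exact: sign_norm].
- by apply: permop_channel; [exact: p2K | move=> a; rewrite rmorph1 mulr1].
Qed.

Set Implicit Arguments.


Section GS.
Variable T : finType.

Lemma had_layer (l : seq T) : uniq l -> forall x : Basis T,
  foldr (fun q psi => apply1 hadamard q psi) (ket0 T) l x
  = (sqrtC 2)^-1 ^+ size l * [forall q, (q \notin l) ==> ~~ x q]%:R.
Proof.
elim: l => [_|q l IH /andP [Hq Hl]] x /=.
  rewrite expr0 mul1r /ket0.
  have -> // : (x == zero_basis T) = [forall q, (q \notin [::]) ==> ~~ x q].
  apply/idP/idP => [/eqP ->|H]; first by apply/forallP => q; rewrite ffunE.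
  by apply/eqP/ffunP => q; rewrite ffunE; apply/negbTE; exact: (forallP H q).
rewrite /apply1 big_bool /= !IH //.
have -> : [forall q0, (q0 \notin l) ==> ~~ set_bit x q true q0] = false.
  apply/negbTE/negP => /forallP/(_ q); rewrite Hq /= ffunE eqxx //.
rewrite mulr0 mulr0 add0r.
have -> : [forall q0, (q0 \notin l) ==> ~~ set_bit x q false q0]
          = [forall q0, (q0 \notin q :: l) ==> ~~ x q0].
  apply: eq_forallb => q0; rewrite in_cons ffunE.
  by case: eqP => [->|_] /=; rewrite ?Hq ?implybT.
by rewrite /hadamard andbF mulr1 exprS mulrA.
Qed.

Lemma set_bit_id (x : Basis T) q : set_bit x q (x q) = x.
Proof. by apply/ffunP => q'; rewrite ffunE; case: eqP => [->|]. Qed.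

Lemma cz_layer (E : seq (T * T)) (psi : Vec T) x :
  foldr (fun pq psi => apply2 cz pq.1 pq.2 psi) psi E x
  = psi x * (-1) ^+ count (fun pq => x pq.1 && x pq.2) E.
Proof.
elim: E => [|[p q] E IH] /=; first by rewrite expr0 mulr1.
rewrite /apply2.
rewrite (bigD1 (x p)) //= [X in _ + X]big1 ?addr0; last first.
  move=> b1 Hb1; apply: big1 => b2 _.
  by rewrite /cz /= xpair_eqE eq_sym (negbTE Hb1) mul0r.
rewrite (bigD1 (x q)) //= [X in _ + X]big1 ?addr0; last first.
  move=> b2 Hb2.
  by rewrite /cz /= xpair_eqE eqxx (eq_sym (x q)) (negbTE Hb2) mul0r.
rewrite !set_bit_id IH /cz eqxx exprD.
by case: (x p && x q); rewrite /= ?expr1 ?expr0; ring.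
Qed.

Lemma graph_stateE (r : rel T) x :
  graph_state r x = (sqrtC 2)^-1 ^+ #|T| * (-1) ^+ count (fun pq => x pq.1 && x pq.2) (edge_list r).
Proof.
rewrite /graph_state cz_layer had_layer ?enum_uniq // -cardT.
have -> : [forall q, (q \notin enum T) ==> ~~ x q] = true.
  by apply/forallP => q; rewrite mem_enum.
by rewrite mulr1.
Qed.
End GS.

Set Implicit Arguments.

Unset Implicit Arguments.

Section Net.
Variables (n : nat) (e : rel 'I_n) (id : 'I_n -> nat) (c : 'I_n -> bool).
Hypotheses (esym : symmetric e) (eirr : irreflexive e) (idinj : injective id).

Local Notation GL := (GlobalLab Alg 2 n).
Definition ns u := nbrs_sorted e id u.
Definition dg u := size (v_nbrs (view_of e id c u)).
Definition emb s u : LL (dg u) -> GL := @embed Alg 2 n e id c s u.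

Lemma dgE u : dg u = size (ns u).
Proof. by rewrite /dg /= size_map. Qed.

Lemma mem_ns u v : (v \in ns u) = e u v.
Proof. by rewrite /ns /nbrs_sorted mem_sort mem_filter mem_enum andbT. Qed.

Lemma uniq_ns u : uniq (ns u).
Proof. by rewrite /ns /nbrs_sorted sort_uniq filter_uniq // enum_uniq. Qed.

Definition nb u (j : 'I_(dg u)) : 'I_n := nth u (ns u) j.

Lemma e_nb u j : e u (nb u j).
Proof. by rewrite -mem_ns mem_nth // -dgE. Qed.

Lemma nb_inj u : injective (nb u).
Proof.
move=> j j' /eqP; rewrite /nb nth_uniq ?uniq_ns // -?dgE //.
by move/eqP/val_inj.
Qed.

Lemma nb_onto u v : e u v -> exists j, nb u j = v.
Proof.
rewrite -mem_ns => Hv.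
have Hi : (index v (ns u) < dg u)%N by rewrite dgE index_mem.
by exists (Ordinal Hi); rewrite /nb nth_index.
Qed.

Lemma embQ s u i : emb s u (inl (inl i)) = inl (u, i). Proof. by []. Qed.
Lemma embIn s u j a : emb s u (inl (inr (j, a))) = inr (inord s, nb u j, u, a).
Proof. by []. Qed.
Lemma embOut s u j a : emb s u (inr (j, a)) = inr (inord s.+1, u, nb u j, a).
Proof. by []. Qed.

Lemma inord4 s : (s < 4)%N -> nat_of_ord (inord s : 'I_4) = s.
Proof. by move=> H; rewrite inordK. Qed.

Lemma emb_inj s u : (s <= 2)%N -> injective (emb s u).
Proof.
move=> Hs [[i|[j a]]|[j a]] [[i'|[j' a']]|[j' a']] //=; rewrite ?embQ ?embIn ?embOut.
- by case=> ->.
- by case=> Ej ->; rewrite (nb_inj u j j' Ej).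
- case=> E _ _ _; move: (congr1 (@nat_of_ord _) E); rewrite !inord4; lia.
- case=> E _ _ _; move: (congr1 (@nat_of_ord _) E); rewrite !inord4; lia.
- by case=> Ej ->; rewrite (nb_inj u j j' Ej).
Qed.

Definition regb s u (l : GL) : bool :=
  match l with
  | inl (w, _) => w == u
  | inr (((t, x), y), _) => ((t == s :> nat) && (y == u) && e u x)
                            || ((t == s.+1 :> nat) && (x == u) && e u y)
  end.

Lemma codom_emb s u l : (s <= 2)%N -> (l \in codom (emb s u)) = regb s u l.
Proof.
move=> Hs; apply/idP/idP.
  case/codomP => l0 ->; case: l0 => [[i|[j a]]|[j a]] /=; rewrite ?embQ ?embIn ?embOut /=.
  - by rewrite eqxx.
  - by rewrite inord4 ?eqxx ?e_nb //; lia.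
  - by rewrite inord4 ?eqxx ?e_nb ?orbT //; lia.
case: l => [[w i]|[[[t x] y] k]] /=.
  by move/eqP => ->; apply/codomP; exists (inl (inl i)).
case/orP => /andP [/andP [/eqP Ht /eqP Hy] He].
  have [j Hj] := nb_onto u _ He.
  apply/codomP; exists (inl (inr (j, k))); rewrite embIn Hj Hy.
  by congr (inr (_, _, _, _)); apply: val_inj; rewrite /= inord4 // -Ht.
have [j Hj] := nb_onto u _ He.
apply/codomP; exists (inr (j, k)); rewrite embOut Hj Hy.
by congr (inr (_, _, _, _)); apply: val_inj; rewrite /= inord4 // -Ht.
Qed.


Lemma glue_closed s u (a : Basis (LL (dg u))) (C C' : Basis GL) : (s <= 2)%N ->
  (forall l, ~~ regb s u l -> C l = C' l) -> (forall t, a t = C' (emb s u t)) ->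
  glue (emb s u) a C = C'.
Proof.
move=> Hs H1 H2; apply/ffunP => l; case: (boolP (l \in codom (emb s u))).
  by case/codomP => t ->; rewrite glue_in ?H2 //; apply: emb_inj.
by move=> Hl; rewrite glue_out ?H1 -?codom_emb //; apply: emb_inj.
Qed.

Definition sQ (x : Basis GL) : {ffun 'I_n -> bool} := [ffun u => x (inl (u, ord0))].
Definition mkcfg (s : {ffun 'I_n -> bool}) (B : 'I_4 -> 'I_n -> 'I_n -> bool) : Basis GL :=
  [ffun l : GL => match l with inl (w, _) => s w | inr (((t, x), y), _) => B t x y end].
Definition supd (s : {ffun 'I_n -> bool}) u b : {ffun 'I_n -> bool} :=
  [ffun w => if w == u then b else s w].

Definition B0 (l : seq 'I_n) (s : {ffun 'I_n -> bool}) (t : 'I_4) x y :=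
  (t == 1 :> nat) && e x y && s x && (x \in l).
Definition amp0 (l : seq 'I_n) (s : {ffun 'I_n -> bool}) : algC :=
  (\prod_(v <- l) w0 (c v) (s v)) * [forall v, (v \notin l) ==> ~~ s v]%:R.
Definition cfg0 l s := mkcfg s (B0 l s).

Lemma mkcfgQ s B w i : mkcfg s B (inl (w, i)) = s w.
Proof. by rewrite ffunE. Qed.
Lemma mkcfgP s B t x y k : mkcfg s B (inr (t, x, y, k)) = B t x y.
Proof. by rewrite ffunE. Qed.

Lemma sQ_glue s u a x : (s <= 2)%N ->
  sQ (glue (emb s u) a x) = supd (sQ x) u (a (lQ _)).
Proof.
move=> Hs; apply/ffunP => w; rewrite [LHS]ffunE [RHS]ffunE [X in if _ then _ else X]ffunE.
case: eqP => [->|Hw].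
  exact: (glue_in (emb_inj s u Hs) a x (lQ _)).
by rewrite glue_out // codom_emb //=; apply/eqP.
Qed.

Lemma step0_node l u : u \notin l ->
  apply_channel (map (lift_op (emb 0 u)) (local_op Alg 0 (view_of e id c u)))
     (density (St sQ (amp0 l) (cfg0 l)))
  = density (St sQ (amp0 (u :: l)) (cfg0 (u :: l))).
Proof.
move=> Hu.
have Hinj := emb_inj 0 u isT.
rewrite /= (@chan_repl _ _ _ Hinj _ (zero_basis _)); last first.
  apply: St_glue0 => // k Hk.
  have Hku : k u = false.
    apply: negbTE; move: Hk; rewrite /amp0.
    case: (boolP [forall _, _]) => [/forallP/(_ u)/implyP -> //|_].
    by rewrite mulr0 eqxx.
  apply/ffunP => [[[i|[j a]]|[j a]]]; rewrite !ffunE /=.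
  - by rewrite Hku.
  - by rewrite /B0 inord4.
  - by rewrite /B0 inord4 // Hku andbF.
congr density.
etransitivity.
  apply: (@St_repl _ _ _ Hinj _ sQ (amp0 l) (cfg0 l) (zero_basis _)
           (fun s => supd s u false) (fun s => s u) (lQ _)
           (w0 (c u)) (g0 _)).
  - by move=> x; rewrite sQ_glue // ffunE.
  - move=> k; apply/ffunP => [[[i|[j a]]|[j a]]]; rewrite !ffunE /=.
    + by rewrite /supd ffunE eqxx.
    + by rewrite /B0 inord4.
    + by rewrite /B0 /supd !ffunE eqxx andbF.
  - by move=> x; rewrite ffunE.
  - by move=> b; rewrite g0_Q.
congr St; apply: functional_extensionality => s.
  rewrite /amp0 big_cons -mulrA; congr (_ * (_ * _)).
    apply: eq_big_seq => v Hv; rewrite /supd ffunE; case: eqP => // Evu.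
    by move: Hu; rewrite -Evu Hv.
  have -> // : [forall v, (v \notin l) ==> ~~ supd s u false v]
    = [forall v, (v \notin u :: l) ==> ~~ s v].
  apply: eq_forallb => v; rewrite in_cons /supd ffunE.
  by case: eqP => [->|_] /=; rewrite ?implybT.
apply: glue_closed => //.
  move=> [[w i]|[[[t x] y] k]] /= Hl; rewrite /cfg0 !ffunE /=.
    by rewrite (negbTE Hl).
  rewrite /B0 in_cons /supd ffunE; case: (x =P u) Hl => [->|Hxu] /= Hl.
    rewrite andbF andbT /=; move: Hl; rewrite eirr andbF /=.
    by case: (_ == 1%N) => //=; case: (e u y).
  by [].
move=> [[i|[j a]]|[j a]]; rewrite /cfg0 !ffunE /=.
- by [].
- by rewrite /B0 inord4.
- by rewrite /B0 inord4 // e_nb in_cons eqxx !andbT.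
Qed.


Definition stepF s (u : 'I_n) (r : Op GL) : Op GL :=
  apply_channel (map (lift_op (emb s u)) (local_op Alg s (view_of e id c u))) r.

Lemma do_stepE s rho : do_step e id c s rho = foldr (stepF s) rho (enum 'I_n).
Proof. by []. Qed.

Lemma foldr_step s (P : seq 'I_n -> Op GL) :
  (forall u l, u \notin l -> stepF s u (P l) = P (u :: l)) ->
  forall l, uniq l -> foldr (stepF s) (P [::]) l = P l.
Proof.
move=> H; elim=> [//|u l IH] /= /andP [Hu Hl].
by rewrite IH // H.
Qed.

Lemma init_St : @init_state Alg 2 n = density (St sQ (amp0 [::]) (cfg0 [::])).
Proof.
have E : forall x, St sQ (amp0 [::]) (cfg0 [::]) x = (x == zero_basis GL)%:R.
  move=> x; rewrite /St /amp0 big_nil mul1r.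
  case: (boolP [forall v, _]) => [/forallP H|/forallP H].
    have -> : cfg0 [::] (sQ x) = zero_basis GL.
      apply/ffunP => [[[w i]|[[[t y] z] k]]]; rewrite !ffunE /=.
      - by move: (H w); rewrite /= ffunE => /negbTE.
      - by rewrite /B0 in_nil andbF.
    by rewrite natr_true mul1r.
  rewrite natr_false mul0r.
  case: eqP => [Ex|_] //.
  by exfalso; apply: H => v; rewrite Ex !ffunE.
apply: functional_extensionality => x; apply: functional_extensionality => y.
rewrite /init_state /density !E rmorph_nat -natrM mulnb.
by [].
Qed.

Lemma step0_all : do_step e id c 0 (@init_state Alg 2 n) = density (St sQ (amp0 (enum 'I_n)) (cfg0 (enum 'I_n))).
Proof.
rewrite do_stepE init_St; apply: (foldr_step 0 (fun l => density (St sQ (amp0 l) (cfg0 l)))).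
  by move=> u l Hu; rewrite /stepF step0_node.
exact: enum_uniq.
Qed.


Lemma supd_id s u : supd s u (s u) = s.
Proof. by apply/ffunP => w; rewrite ffunE; case: eqP => [->|]. Qed.

Definition B1 (l : seq 'I_n) (s : {ffun 'I_n -> bool}) (t : 'I_4) x y :=
  ((t == 1 :> nat) && e x y && s x && (y \notin l))
  || ((t == 2 :> nat) && e x y && s y && (x \in l)).
Definition cfg1 l s := mkcfg s (B1 l s).
Definition cnt u (s : {ffun 'I_n -> bool}) : nat :=
  \sum_(j < dg u | (id (nb u j) < id u)%N) s (nb u j).
Definition amp1 (l : seq 'I_n) s : algC :=
  amp0 (enum 'I_n) s * \prod_(v <- l) (-1) ^+ (s v * cnt v s)%N.

Lemma nth_nbrs u (j : 'I_(dg u)) : nth 0%N (v_nbrs (view_of e id c u)) j = id (nb u j).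
Proof. by rewrite /= (nth_map u) // -dgE. Qed.

Lemma step1_node l u : u \notin l ->
  stepF 1 u (density (St sQ (amp1 l) (cfg1 l)))
  = density (St sQ (amp1 (u :: l)) (cfg1 (u :: l))).
Proof.
move=> Hu.
have Hinj := emb_inj 1 u isT.
rewrite /stepF /= (chan_permop Hinj _ _ (@p1K _)).
congr density.
etransitivity.
  apply: (@St_perm _ _ _ Hinj _ sQ (amp1 l) (cfg1 l) _ _ (@p1K _)).
  move=> x; rewrite sQ_glue // (_ : p1 _ _ (lQ _) = sQ x u); first exact: supd_id.
  by rewrite /lQ !ffunE.
congr St; apply: functional_extensionality => s.
  rewrite /amp1 big_cons [X in _ = _ * X]mulrC mulrA; congr (_ * _).
  rewrite /ph1 /cnt; congr (_ ^+ _); rewrite !ffunE /=; congr (_ * _)%N.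
  apply: eq_big => j.
    by rewrite (nth_map u) //; have := ltn_ord j; rewrite [X in (_ < X)%N -> _]size_map.
  move=> _; rewrite !ffunE /= /B1 inord4 // esym e_nb Hu /=.
  by rewrite andbT orbF.
apply: glue_closed => //.
{ move=> [[w i]|[[[t x] y] k]] /= Hl; rewrite /cfg1 !ffunE //=.
  rewrite /B1 !in_cons; move: Hl.
  case: (y =P u) => [->|_]; case: (x =P u) => [->|_] /=.
  - by rewrite eirr !andbF.
  - rewrite (esym x u) (negbTE Hu).
    by case: (_ == 1%N); case: (_ == 2%N); case: (e u x); rewrite /= ?andbF ?andbT ?orbF.
  - by case: (_ == 1%N); case: (_ == 2%N); case: (e u y); rewrite /= ?andbF ?andbT ?orbF.
  - by []. }
move=> [[i|[j a]]|[j a]]; rewrite /cfg1 !ffunE /=.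
- by [].
- by rewrite /B1 !inord4 // !in_cons eqxx (negbTE Hu) /= !andbF.
- by rewrite /B1 !inord4 // !in_cons eqxx (negbTE Hu) (esym _ u) e_nb /= ?andbT ?orbF.
Qed.


Definition B2 (l : seq 'I_n) (s : {ffun 'I_n -> bool}) (t : 'I_4) x y :=
  (t == 2 :> nat) && e x y && s y && (y \notin l).
Definition cfg2 l s := mkcfg s (B2 l s).
Definition amp2 s := amp1 (enum 'I_n) s.

Lemma step2_node l u : u \notin l ->
  stepF 2 u (density (St sQ amp2 (cfg2 l)))
  = density (St sQ amp2 (cfg2 (u :: l))).
Proof.
move=> Hu.
have Hinj := emb_inj 2 u isT.
rewrite /stepF /= (chan_permop Hinj _ _ (@p2K _)).
congr density.
etransitivity.
  apply: (@St_perm _ _ _ Hinj _ sQ amp2 (cfg2 l) _ (fun _ => 1) (@p2K _)).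
  move=> x; rewrite sQ_glue // (_ : p2 _ _ (lQ _) = sQ x u); first exact: supd_id.
  by rewrite /lQ !ffunE.
congr St; apply: functional_extensionality => s.
  by rewrite mulr1.
apply: glue_closed => //.
{ move=> [[w i]|[[[t x] y] k]] /= Hl; rewrite /cfg2 !ffunE //=.
  rewrite /B2 !in_cons; move: Hl.
  case: (y =P u) => [->|_] /=; last by [].
  rewrite (esym x u) (negbTE Hu).
  by case: (_ == 2%N); case: (e u x); rewrite /= ?andbF ?andbT ?orbF. }
move=> [[i|[j a]]|[j a]]; rewrite /cfg2 !ffunE /=.
- by [].
- rewrite /B2 !inord4 // !in_cons eqxx (negbTE Hu) (esym _ u) e_nb /=.
  by case: (s u).
- by rewrite /B2 !inord4.
Qed.

Lemma cfg01 : cfg0 (enum 'I_n) = cfg1 [::].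
Proof.
apply: functional_extensionality => s; apply/ffunP => [[[w i]|[[[t x] y] k]]]; rewrite !ffunE //=.
by rewrite /B0 /B1 mem_enum in_nil /= andbT andbF orbF.
Qed.

Lemma amp01 : amp0 (enum 'I_n) = amp1 [::].
Proof. by apply: functional_extensionality => s; rewrite /amp1 big_nil mulr1. Qed.

Lemma cfg12 : cfg1 (enum 'I_n) = cfg2 [::].
Proof.
apply: functional_extensionality => s; apply/ffunP => [[[w i]|[[[t x] y] k]]]; rewrite !ffunE //=.
by rewrite /B1 /B2 !mem_enum in_nil /= !andbF !andbT.
Qed.

Lemma cfg2_final : cfg2 (enum 'I_n) = fun s => mkcfg s (fun _ _ _ => false).
Proof.
apply: functional_extensionality => s; apply/ffunP => [[[w i]|[[[t x] y] k]]]; rewrite !ffunE //=.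
by rewrite /B2 mem_enum andbF.
Qed.

Lemma step1_all : foldr (stepF 1) (density (St sQ (amp1 [::]) (cfg1 [::]))) (enum 'I_n)
  = density (St sQ (amp1 (enum 'I_n)) (cfg1 (enum 'I_n))).
Proof.
apply: (foldr_step 1 (fun l => density (St sQ (amp1 l) (cfg1 l)))); last exact: enum_uniq.
by move=> u l Hu; rewrite step1_node.
Qed.

Lemma step2_all : foldr (stepF 2) (density (St sQ amp2 (cfg2 [::]))) (enum 'I_n)
  = density (St sQ amp2 (cfg2 (enum 'I_n))).
Proof.
apply: (foldr_step 2 (fun l => density (St sQ amp2 (cfg2 l)))); last exact: enum_uniq.
by move=> u l Hu; rewrite step2_node.
Qed.

Lemma final_St : final_state e id c = density (St sQ amp2 (fun s => mkcfg s (fun _ _ _ => false))) :> Op GL.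
Proof.
rewrite /final_state /= step0_all cfg01 amp01 !do_stepE step1_all cfg12.
by rewrite -/amp2 step2_all cfg2_final.
Qed.


Definition oq : selected c -> GL := @out_qubit Alg 2 n c.

Lemma oq_inj : injective oq.
Proof. by move=> p q [] /val_inj. Qed.

Lemma oq_codom w i : (inl (w, i) : GL) \in codom oq -> c w.
Proof. by case/codomP => p [-> _]; exact: (valP p). Qed.

Lemma inr_notin l' : (inr l' : GL) \notin codom oq.
Proof. by apply/codomP => [[p]]. Qed.

Definition sh (a : Basis (selected c)) := sQ (glue oq a (zero_basis GL)).

Lemma sh_val a p : sh a (val p) = a p.
Proof. rewrite ffunE; exact: (glue_in oq_inj a _ p). Qed.

Lemma sh_out a w : ~~ c w -> sh a w = false.
Proof.
move=> Hw; rewrite ffunE glue_out ?ffunE //.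
by apply: contra Hw; apply: oq_codom.
Qed.

Lemma amp2_support s w : amp2 s != 0 -> s w -> c w.
Proof.
rewrite /amp2 /amp1 /amp0 (bigD1_seq w) ?mem_enum ?enum_uniq //=.
case: (boolP (c w)) => // Hc; move=> H Hs; move: H.
by rewrite /w0 Hs /= !mul0r eqxx.
Qed.

Definition cfgF (s : {ffun 'I_n -> bool}) := mkcfg s (fun _ _ _ => false).

Lemma psiF_z (a : Basis (selected c)) (z : Basis GL) : [forall t, z (oq t) == false] -> z != zero_basis GL ->
  St sQ amp2 cfgF (glue oq a z) = 0.
Proof.
move=> /forallP Hz Hnz; rewrite /St.
case: (eqVneq (amp2 (sQ (glue oq a z))) 0) => [->|Ha]; first by rewrite mul0r.
case: eqP => [Eg|_]; last by rewrite mulr0.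
exfalso; move/eqP: Hnz; apply; apply/ffunP => l; rewrite [RHS]ffunE.
case: l => [[w i]|l'].
  rewrite (ord1 i); case: (boolP (c w)) => Hc.
    exact: (eqP (Hz (exist _ w Hc))).
  have Hn : (inl (w, ord0) : GL) \notin codom oq by apply: contra Hc; apply: oq_codom.
  rewrite -(glue_out a z Hn) Eg /cfgF mkcfgQ.
  by apply/negbTE; apply: contra Hc => Hs; apply: (amp2_support _ _ Ha Hs).
rewrite -(glue_out a z (inr_notin l')) Eg /cfgF.
by case: l' => [[[t x] y] k]; rewrite mkcfgP.
Qed.

Lemma psiF_0 (a : Basis (selected c)) : St sQ amp2 cfgF (glue oq a (zero_basis GL)) = amp2 (sh a).
Proof.
rewrite /St -/(sh a).
have -> : glue oq a (zero_basis GL) == cfgF (sh a).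
  apply/eqP/ffunP => l; case: l => [[w i]|l'].
    by rewrite /cfgF mkcfgQ /sh [sQ _ _]ffunE (ord1 i).
  rewrite glue_out ?inr_notin // ffunE /cfgF.
  by case: l' => [[[t x] y] k]; rewrite mkcfgP.
by rewrite natr_true mulr1.
Qed.

Lemma output_amp x y : output_state Alg 2 e id x y = density (fun a => amp2 (sh a)) x y.
Proof.
rewrite /output_state /reduced final_St.
rewrite (bigD1 (zero_basis GL)) /=; last by apply/forallP => t; rewrite ffunE.
rewrite big1 ?addr0.
  by rewrite /density -/oq !psiF_0.
by move=> z /andP [Hz Hnz]; rewrite /density -/oq psiF_z // mul0r.
Qed.


Lemma cntE v s : cnt v s = (\sum_(w | e v w && (id w < id v)%N) s w)%N.
Proof.
rewrite /cnt /nb.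
rewrite -(big_mkord (fun j => id (nth v (ns v) j) < id v)%N (fun j => nat_of_bool (s (nth v (ns v) j)))).
rewrite dgE -(big_nth v (fun w => id w < id v)%N (fun w => nat_of_bool (s w))).
rewrite /ns /nbrs_sorted (perm_big [seq w <- enum 'I_n | e v w]); last by rewrite perm_sort.
by rewrite big_filter_cond big_enum_cond.
Qed.


Lemma transfer (F : 'I_n -> nat) : (forall v, ~~ c v -> F v = 0%N) ->
  (\sum_v F v = \sum_(p : selected c) F (val p))%N.
Proof.
move=> H; rewrite (bigID c) /= [X in (_ + X)%N]big1 ?addn0; last by move=> v /H.
exact: (big_sub c F).
Qed.

Lemma count_sumb (T : Type) (P : pred T) (r : seq T) : count P r = (\sum_(x <- r) P x)%N.
Proof. by elim: r => [|x r IH]; rewrite ?big_nil ?big_cons //= IH. Qed.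

Lemma sumM (a : Basis (selected c)) :
  (\sum_(v <- enum 'I_n) (sh a v * cnt v (sh a)))%N
  = count (fun pq => a pq.1 && a pq.2) (edge_list (@induced_rel n e c)).
Proof.
set X := sh a.
have L : (\sum_(v <- enum 'I_n) (X v * cnt v X)
          = \sum_v \sum_w (PP e X v w && (id w < id v)))%N.
  rewrite big_enum /=; apply: eq_bigr => v _; rewrite cntE big_distrr /= big_mkcond /=.
  apply: eq_bigr => w _; rewrite /PP.
  by case: (X v); case: (X w); case: (e v w); case: (id w < id v)%N.
have R : count (fun pq => a pq.1 && a pq.2) (edge_list (@induced_rel n e c))
   = (\sum_p \sum_q (PP (@induced_rel n e c) a p q && (enum_rank p < enum_rank q)))%N.
  rewrite /edge_list count_filter count_sumb big_enum /= [RHS]pair_bigA /=.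
  apply: eq_bigr => [[p q]] _ /=; rewrite /PP.
  by case: (a p); case: (a q); case: (@induced_rel n e c p q); case: (enum_rank p < enum_rank q)%N.
have isym : symmetric (@induced_rel n e c) by move=> p q; exact: esym.
have iirr : irreflexive (@induced_rel n e c) by move=> p; exact: eirr.
have rinj : injective (fun p : selected c => nat_of_ord (enum_rank p)).
  by move=> p q /val_inj/enum_rank_inj.
have N : (\sum_v \sum_w PP e X v w = \sum_p \sum_q PP (@induced_rel n e c) a p q)%N.
  rewrite (transfer (fun v => \sum_w PP e X v w)%N); last first.
    by move=> v Hv; apply: big1 => w _; rewrite /PP sh_out // andbF.
  apply: eq_bigr => p _.
  rewrite (transfer (fun w => nat_of_bool (PP e X (val p) w))); last first.
    by move=> w Hw; rewrite /PP (sh_out _ _ Hw) andbF.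
  by apply: eq_bigr => q _; rewrite /PP /X !sh_val.
apply/eqP; rewrite -(eqn_pmul2r (_ : 0 < 2)%N) // L R.
rewrite (half_sum X esym eirr idinj) (half_sum2 a isym iirr rinj) N.
by [].
Qed.


Lemma amp2_sh (a : Basis (selected c)) : amp2 (sh a) = graph_state (@induced_rel n e c) a.
Proof.
rewrite graph_stateE /amp2 /amp1 /amp0.
have A : \prod_(v <- enum 'I_n) w0 (c v) (sh a v) = (sqrtC 2)^-1 ^+ #|{: selected c}|.
  rewrite big_enum /= (bigID c) /= [X in _ * X]big1 ?mulr1; last first.
    by move=> v Hv; rewrite sh_out // /w0 (negbTE Hv).
  rewrite (eq_bigr (fun _ => (sqrtC 2)^-1)); last by move=> v ->.
  by rewrite prodr_const card_sig.
have B : [forall v, (v \notin enum 'I_n) ==> ~~ sh a v] = true.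
  by apply/forallP => v; rewrite mem_enum.
by rewrite A B natr_true mulr1 prodrXr sumM.
Qed.

End Net.


Theorem theorem3 :
  exists A : algorithm,
    valid_algorithm A /\
    forall (n : nat) (e : rel 'I_n) (id : 'I_n -> nat) (c : 'I_n -> bool),
      symmetric e -> irreflexive e -> injective id ->
      forall x y : Basis (selected c),
        @output_state A 2 n e id c x y =
        density (graph_state (@induced_rel n e c)) x y.
Proof.
exists Alg; split; first exact: Alg_valid.
move=> n e id c esym eirr idinj x y.
by rewrite output_amp // /density !amp2_sh.
Qed.
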